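(* Let $X$ be a set with $|X|\ge 4$. Then $S_X$, as a subgroup of itself, is not rack admissible; that is, there is no rack $(X,* )$ with $\mathrm{LMlt}(X,* )=S_X$.
   Context: A rack is a groupoid $(X,* )$ whose left translations $L_x$ ($y\mapsto x*y$) are bijections and which satisfies $x*(y*z)=(x*y)*(x*z)$. $\mathrm{LMlt}(X,* )=\langle L_x:x\in X\rangle\le S_X$, where $S_X$ is the symmetric group on $X$. A subgroup $G\le S_X$ is rack admissible if there is a rack $(X,* )$ with $\mathrm{LMlt}(X,* )=G$. *)

(* Defs.v *)
From mathcomp Require Import all_boot fingroup perm.
Set Implicit Arguments. Unset Strict Implicit. Unset Printing Implicit Defensive.

Definition is_rack (X : finType) (op : X -> X -> X) : Prop :=
  (forall x, bijective (op x)) /\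
  (forall x y z, op x (op y z) = op (op x y) (op x z)).

Definition Lset (X : finType) (op : X -> X -> X) : {set {perm X}} :=
  [set s : {perm X} | [exists x, [forall y, s y == op x y]]].

Definition LMlt (X : finType) (op : X -> X -> X) : {set {perm X}} :=
  generated (Lset op).

(* Main.v *)
Require Import Defs.
From mathcomp Require Import all_boot fingroup perm.
From mathcomp Require Import zify.
Set Implicit Arguments. Unset Strict Implicit. Unset Printing Implicit Defensive.
Import GroupScope.

Section Aux.
Variable X : finType.
Variable op : X -> X -> X.

Definition autset : {set {perm X}} :=
  [set g : {perm X} | [forall y, forall z, op (g y) (g z) == g (op y z)]].

Lemma autset_group : group_set autset.
Proof.
apply/group_setP; split.
  by rewrite inE; apply/forallP => y; apply/forallP => z; rewrite !perm1.
move=> g h; rewrite !inE => /forallP Hg /forallP Hh.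
apply/forallP => y; apply/forallP => z; rewrite !permM.
move/forallP: (Hh (g y)) => /(_ (g z)) /eqP ->.
by move/forallP: (Hg y) => /(_ z) /eqP ->.
Qed.

Canonical autset_grp := Group autset_group.

Lemma two_others (y z : X) : 4 <= #|X| ->
  exists w1 w2, [/\ w1 != y, w1 != z, w2 != y, w2 != z & w1 != w2].
Proof.
move=> h4.
have : 1 < #|[predC [set y; z]]|.
  have := cardC [set y; z]; rewrite cards2; case: (y != z) => /= E; move: h4; rewrite -E; lia.
case/card_gt1P => w1 [w2 [H1 H2 H12]].
move: H1 H2; rewrite !inE !negb_or => /andP[? ?] /andP[? ?].
by exists w1, w2; split.
Qed.
End Aux.

Theorem corollary3p8 (X : finType) (hX : 4 <= #|X|) :
  ~ exists op : X -> X -> X, is_rack op /\ LMlt op = [set: {perm X}].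
Proof.
case=> op [[Hbij Hsd] HL].
have Hsub : LMlt op \subset autset op.
  rewrite /LMlt gen_subG; apply/subsetP => s; rewrite inE => /existsP [x /forallP Hs].
  rewrite inE; apply/forallP => y; apply/forallP => z.
  by rewrite (eqP (Hs y)) (eqP (Hs z)) (eqP (Hs (op y z))) -Hsd.
have Haut : forall g : {perm X}, forall y z, op (g y) (g z) = g (op y z).
  move=> g y z; have : g \in autset op by apply: (subsetP Hsub); rewrite HL inE.
  by rewrite inE => /forallP /(_ y) /forallP /(_ z) /eqP.
have Hid : forall y z, op y z = z.
  move=> y; set c := op y.
  have inj : injective c by exact: bij_inj (Hbij y).
  have comm : forall a b, a != y -> b != y -> forall w, c (tperm a b w) = tperm a b (c w).
    move=> a b ay b_y w; by rewrite /c -Haut (tpermD ay b_y).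
  have Hz : forall z, z != y -> c z = z.
    move=> z zy; have [w1 [w2 [w1y w1z w2y w2z w12]]] := two_others y z hX.
    have key : forall w, w != y -> w != z -> (c z == z) || (c z == w).
      move=> w wy wz; apply/negPn/negP; rewrite negb_or => /andP [n1 n2].
      have : c w = c z.
        by rewrite -{1}(tpermL z w) comm // tpermD // eq_sym.
      by move/inj/eqP; rewrite (negbTE wz).
    move: (key w1 w1y w1z) (key w2 w2y w2z).
    case/orP => [/eqP //|/eqP ->]; case/orP => [/eqP E|/eqP E].
      by move: w1z; rewrite E eqxx.
    by move: w12; rewrite E eqxx.
  move=> z; case: (eqVneq z y) => [->|zy]; last exact: Hz.
  case: (eqVneq (c y) y) => // cy.
  by move: (Hz _ cy) => /inj /eqP; rewrite (negbTE cy).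
have Hsub1 : LMlt op \subset [1 {perm X}].
  rewrite /LMlt gen_subG; apply/subsetP => s; rewrite inE => /existsP [x /forallP Hs].
  rewrite inE; apply/eqP/permP => y; by rewrite (eqP (Hs _)) Hid perm1.
have /card_gt0P [x0 _] : 0 < #|X| by apply: leq_trans hX.
have [w1 [w2 [_ _ _ _ w12]]] := two_others x0 x0 hX.
have : tperm w1 w2 \in [1 {perm X}] by apply: (subsetP Hsub1); rewrite HL inE.
rewrite inE => /eqP /permP /(_ w1); rewrite tpermL perm1 => E.
by move: w12; rewrite E eqxx.
Qed.
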